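(* For every cardinal $\lambda\geqslant 2$ there is no Hausdorff $d$-feebly compact topological semigroup which contains the $\lambda$-polycyclic monoid $P_\lambda$ as a dense subsemigroup.
   Context: For a non-zero cardinal $\lambda$, the polycyclic monoid $P_\lambda$ is the monoid with zero given by the presentation $\langle \{p_i\}_{i\in\lambda},\{p_i^{-1}\}_{i\in\lambda}\mid p_ip_i^{-1}=1,\ p_ip_j^{-1}=0 \text{ for } i\neq j\rangle$. A topological semigroup is a topological space with a jointly continuous associative operation. A space is $d$-feebly compact if every discrete family of its open subsets is finite. *)

(* Defs.v *)
From HB Require Import structures.
From mathcomp Require Import all_boot all_order.
From mathcomp Require Import all_classical all_reals all_analysis.
Set Implicit Arguments. Unset Strict Implicit. Unset Printing Implicit Defensive.
Local Open Scope classical_set_scope.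

(* The polycyclic monoid P_I over an alphabet (index set) I, in its standard
   normal-form model: zero is [None]; the nonzero element [Some (u, v)]
   stands for p_u^{-1} p_v.  Identity is Some ([::], [::]),
   p_i = Some ([::], [:: i]), p_i^{-1} = Some ([:: i], [::]). *)
Definition polycyclic (I : eqType) := option (seq I * seq I).

Definition polymul (I : eqType) (x y : polycyclic I) : polycyclic I :=
  match x, y with
  | Some (u, v), Some (w, z) =>
      if prefix v w then Some (u ++ drop (size v) w, z)
      else if prefix w v then Some (u, z ++ drop (size w) v)
      else None
  | _, _ => None
  end.

Definition discrete_family (S : topologicalType) (F : set (set S)) : Prop :=
  forall x : S, exists2 N : set S, nbhs x N &
    forall U V, F U -> F V -> N `&` U !=set0 -> N `&` V !=set0 -> U = V.

Definition d_feebly_compact (S : topologicalType) : Prop :=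
  forall F : set (set S), (forall U, F U -> open U) -> discrete_family F ->
    finite_set F.

Definition contains_dense_polycyclic (I : eqType) (S : topologicalType)
  (mul : S -> S -> S) : Prop :=
  exists h : polycyclic I -> S,
    [/\ injective h,
        (forall x y, h (polymul x y) = mul (h x) (h y)) &
        dense (range h)].

(* Main.v *)
Require Import Defs.
From HB Require Import structures.
From mathcomp Require Import all_boot all_order.
From mathcomp Require Import all_classical all_reals all_analysis.
From mathcomp Require Import zify.
Set Implicit Arguments. Unset Strict Implicit.

Section Alg.
Variable I : eqType.
Implicit Types (u v w : seq I) (p : polycyclic I).

Lemma pm_1l p : polymul (Some ([::], [::])) p = p.
Proof. by case: p => [[u v]|] //=; rewrite prefix0s drop0. Qed.

Lemma pm_0l p : polymul None p = None. Proof. by []. Qed.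
Lemma pm_0r p : polymul p None = None. Proof. by case: p => [[]|]. Qed.

Lemma prefix_eq_size v w : prefix v w -> size w <= size v -> v = w.
Proof.
rewrite prefixE => /eqP h hs; move: h; rewrite take_oversize // => ->.
Qed.

Lemma drop_nil_size w (n : nat) : drop n w = [::] -> size w <= n.
Proof. by move=> h; rewrite -subn_eq0 -size_drop h. Qed.

Lemma mul_one_r p w : polymul p (Some (w, [::])) = Some ([::], [::]) -> p = Some ([::], w).
Proof.
case: p => [[u v]|] //=.
case: ifP => [pv [] | _].
  case: u => [|//] /= /drop_nil_size hs.
  by rewrite (prefix_eq_size pv hs).
case: ifP => [pw [-> /= /drop_nil_size hs]|//].
by rewrite -(prefix_eq_size pw hs).
Qed.

Lemma mul_one_l p w : polymul (Some ([::], w)) p = Some ([::], [::]) -> p = Some (w, [::]).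
Proof.
case: p => [[u v]|] //=.
case: ifP => [pv [/drop_nil_size hs ->]|_].
  by rewrite (prefix_eq_size pv hs).
case: ifP => [pw []|//].
case: v => [|//] /= /drop_nil_size hs.
by rewrite -(prefix_eq_size pw hs).
Qed.

Lemma mul_fix_l p w : polymul (Some ([::], w)) p = Some ([::], w) ->
  exists2 u, p = Some (u, u) & prefix u w.
Proof.
case: p => [[u v]|] //=.
case: ifP => [pv [/drop_nil_size hs ->]|_].
  rewrite (prefix_eq_size pv hs); by exists u => //; exact: prefix_refl.
case: ifP => [pw [] |//].
move: pw => /prefixP [r ->] /eqP.
rewrite drop_size_cat // => /eqP h.
have {}h : v = u.
  have hs := congr1 size h; rewrite !size_cat in hs; move/addIn: hs => hs.
  by move/eqP: h; rewrite eqseq_cat // => /andP[/eqP].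
rewrite h.
by exists u => //; exact: prefix_prefix.
Qed.

Variables (i j : I).
Hypothesis hij : i != j.

Definition wd (n : nat) : seq I := rcons (nseq n i) j.
Definition qd (n : nat) : seq I := nseq n.+1 i.

Lemma size_wd n : size (wd n) = n.+1.
Proof. by rewrite /wd size_rcons size_nseq. Qed.

Lemma nth_wd n k : nth i (wd n) k = if k < n then i else if k == n then j else i.
Proof. by rewrite /wd nth_rcons size_nseq nth_nseq; case: (k < n). Qed.

Lemma wd_incomp n m : prefix (wd n) (wd m) -> n = m.
Proof.
move=> /prefixP [r e].
have hs := congr1 size e; rewrite size_cat !size_wd in hs.
have hn : n <= m by lia.
case: (ltngtP n m) => // hnm; last by lia.
have /= := congr1 (fun s => nth i s n) e.
rewrite nth_cat size_wd ltnSn !nth_wd hnm ltnn eqxx => /eqP.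
by rewrite (negbTE hij).
Qed.

Lemma prefix_wd_proper u n : prefix u (wd n) -> u != wd n -> prefix u (qd n).
Proof.
move=> pu nu.
have hs : size u <= n.
  rewrite leqNgt; apply/negP => hs; move/negP: nu; apply.
  by apply/eqP/prefix_eq_size => //; rewrite size_wd.
move: pu; rewrite !prefixE /wd /qd -cats1 takel_cat ?size_nseq // take_nseq //.
by rewrite take_nseq // ltnW.
Qed.

Lemma idem_below u v : prefix u v -> polymul (Some (u, u)) (Some (v, v)) = Some (v, v).
Proof. by move=> pu; rewrite /= pu; case/prefixP: pu => r ->; rewrite drop_size_cat. Qed.

Lemma incomp_mul (u1 v1 u2 v2 : seq I) : ~~ prefix v1 u2 -> ~~ prefix u2 v1 ->
  polymul (Some (u1, v1)) (Some (u2, v2)) = None.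
Proof. by move=> h1 h2 /=; rewrite (negbTE h1) (negbTE h2). Qed.

Lemma wd_qd_incomp n : polymul (Some (wd n, wd n)) (Some (qd n, qd n)) = None.
Proof.
have neq : wd n != qd n.
  apply/negP => /eqP /(congr1 (fun s => nth i s n)).
  by rewrite nth_wd ltnn eqxx /qd nth_nseq ltnSn => /eqP; rewrite eq_sym (negbTE hij).
apply: incomp_mul.
  apply/negP => pw; have := prefix_eq_size pw; rewrite /qd size_nseq size_wd leqnn.
  by move=> /(_ isT) /eqP; rewrite (negbTE neq).
apply/negP => pw; have := prefix_eq_size pw; rewrite /qd size_nseq size_wd leqnn.
by move=> /(_ isT) /eqP; rewrite eq_sym (negbTE neq).
Qed.

Lemma wd_cc n m : n != m -> polymul (Some (wd n, wd n)) (Some (wd m, wd m)) = None.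
Proof.
move=> nm; apply: incomp_mul; first by apply/negP => /wd_incomp /eqP; rewrite (negbTE nm).
by apply/negP => /wd_incomp /eqP; rewrite eq_sym (negbTE nm).
Qed.

Lemma idem_self u : polymul (Some (u, u)) (Some (u, u)) = Some (u, u).
Proof. exact/idem_below/prefix_refl. Qed.

Lemma xy_one u : polymul (Some ([::], u)) (Some (u, [::])) = Some ([::], [::]).
Proof. by rewrite /= prefix_refl drop_size. Qed.

Lemma xc_x u : polymul (Some ([::], u)) (Some (u, u)) = Some ([::], u).
Proof. by rewrite /= prefix_refl drop_size. Qed.

Lemma cy_y u : polymul (Some (u, u)) (Some (u, [::])) = Some (u, [::]).
Proof. by rewrite /= prefix_refl drop_size cats0. Qed.

Definition Cp : polycyclic I := Some ([:: i], [:: i]).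

Lemma iso_one p : polymul p Cp != p -> polymul p Cp != None ->
  polymul Cp p != p -> polymul Cp p != None -> p = Some ([::], [::]).
Proof.
case: p => [[u v]|] //.
have hv : polymul (Some (u, v)) Cp != Some (u, v) -> polymul (Some (u, v)) Cp != None -> v = [::].
  case: v => [//|k v'] /=.
  case: (eqVneq k i) => [->|nki] /=; rewrite ?prefixs0 ?prefix0s ?eqxx /=.
    by case: v' => [|? ?] /=; rewrite ?cats0 ?eqxx.
  by [].
have hu : forall u, polymul Cp (Some (u, v)) != Some (u, v) -> polymul Cp (Some (u, v)) != None -> u = [::].
  case=> [//|k u'] /=.
  case: (eqVneq i k) => [<-|nki] /=; rewrite ?prefixs0 ?prefix0s ?eqxx /=.
    by rewrite drop0 eqxx.
  by [].
by move=> h1 h2 h3 h4; rewrite (hv h1 h2) (hu _ h3 h4).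
Qed.

End Alg.

Local Open Scope classical_set_scope.

Section Topo.
Variables (S : topologicalType) (mul : S -> S -> S).
Hypothesis mul_cont : continuous (fun p : S * S => mul p.1 p.2).
Hypothesis S_haus : hausdorff_space S.

Lemma cont_l a : continuous (fun t => mul a t).
Proof.
move=> t; apply: (@continuous_comp _ _ _ (fun t => (a, t)) (fun p => mul p.1 p.2)).
  exact: (cvg_pair (cvg_cst a) cvg_id).
exact: mul_cont.
Qed.

Lemma cont_r a : continuous (fun t => mul t a).
Proof.
move=> t; apply: (@continuous_comp _ _ _ (fun t => (t, a)) (fun p => mul p.1 p.2)).
  exact: (cvg_pair cvg_id (cvg_cst a)).
exact: mul_cont.
Qed.

Lemma mul_nbhs s r W : nbhs (mul s r) W ->
  exists N, exists M, [/\ nbhs s N, nbhs r M & forall a b, N a -> M b -> W (mul a b)].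
Proof.
move=> /(@mul_cont (s, r)) [[A B] /= [nA nB] AB].
by exists A, B; split => // a b Aa Bb; apply: (AB (a, b)).
Qed.

Lemma closed1 (x : S) : closed [set x].
Proof. exact/accessible_closed_set1/hausdorff_accessible. Qed.

Lemma open_neq1 (x : S) : open (~` [set x]).
Proof. by rewrite openC; exact: closed1. Qed.

Lemma open_neq (f g : S -> S) : continuous f -> continuous g ->
  open [set t | f t <> g t].
Proof.
move=> cf cg; rewrite openE => t /eqP ftg.
move: S_haus; rewrite open_hausdorff => /(_ _ _ ftg) [[U V] [/= /set_mem fU /set_mem gV]] [oU oV /eqP UV].
rewrite /interior; apply: (@filterS _ _ _ (f @^-1` U `&` g @^-1` V)).
  move=> y [Uy Vy] e; move: UV; rewrite -subset0 => /(_ (f y)); apply; split => //.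
  by rewrite e.
apply: filterI; [apply: cf; exact: open_nbhs_nbhs | apply: cg; exact: open_nbhs_nbhs].
Qed.


Lemma acc_exists (dfc : d_feebly_compact S) (u : nat -> S) :
  (forall n, open [set u n]) -> injective u ->
  exists q : S, forall N, nbhs q N -> forall n0, exists n, (n0 <= n)%N /\ N (u n).
Proof.
move=> ou iu; apply: contrapT => H.
pose F := range (fun n => [set u n]).
have Finf : ~ finite_set F.
  move=> fF; apply: infinite_nat.
  have := @finite_preimage _ _ F (fun n => [set u n]).
  rewrite (_ : _ @^-1` F = setT); last by apply/seteqP; split => // n _; exists n.
  apply => // a b _ _ /= e; apply: iu.
  by have : [set u b] (u a) by rewrite -e.
apply: Finf; apply: dfc; first by move=> U [n _ <-].
move=> x.
move: H => /forallNP /(_ x) /existsNP [N /not_implyP [nN /existsNP [n0 /forallNP Hn]]].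
pose D := (u @` `I_n0) `\` [set x].
have cD : closed D.
  apply: (accessible_finite_set_closed.1 (hausdorff_accessible S_haus)).
  apply: (@sub_finite_set _ _ (u @` `I_n0)); first by move=> y [].
  exact/finite_image/finite_II.
have key : forall n t, N t -> ~ D t -> t = u n -> u n = x.
  move=> n t Nt nDt tn.
  case: (leqP n0 n) => hn; first by exfalso; apply: (Hn n); split => //; rewrite -tn.
  apply: contrapT => nx; apply: nDt; rewrite tn; split => //; by exists n.
exists (N `&` ~` D).
  apply: filterI => //; apply: open_nbhs_nbhs; split; first by rewrite openC.
  by move=> [_ /=]; apply.
move=> U V [n _ <-] [m _ <-] [t [[Nt nDt] /= tn]] [t' [[Nt' nDt'] /= tm]].
by rewrite (key _ _ Nt nDt tn) (key _ _ Nt' nDt' tm).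
Qed.

End Topo.

Section Main.
Variables (I : eqType) (i j : I).
Hypothesis hij : i != j.
Variables (S : topologicalType) (mul : S -> S -> S).
Hypothesis mul_cont : continuous (fun p : S * S => mul p.1 p.2).
Hypothesis S_haus : hausdorff_space S.
Hypothesis S_dfc : d_feebly_compact S.
Variable h : polycyclic I -> S.
Hypothesis h_inj : injective h.
Hypothesis h_mul : forall x y, h (polymul x y) = mul (h x) (h y).
Hypothesis h_dense : dense (range h).

Let E := h (Some ([::], [::])).
Let Z := h None.

Lemma cst_cont (c : S) : continuous (fun _ : S => c).
Proof. by move=> t; apply: cvg_cst. Qed.

Lemma Z_l t : mul Z t = Z.
Proof.
apply: contrapT => ne.
have ne0 : [set x | mul Z x <> Z] !=set0 by exists t.
have [x0 [Hx [p _ e]]] := h_dense ne0 (open_neq S_haus (cont_l mul_cont (a:=Z)) (cst_cont (c:=Z))).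
by apply: Hx; rewrite -e -h_mul pm_0l.
Qed.

Lemma Z_r t : mul t Z = Z.
Proof.
apply: contrapT => ne.
have ne0 : [set x | mul x Z <> Z] !=set0 by exists t.
have [x0 [Hx [p _ e]]] := h_dense ne0 (open_neq S_haus (cont_r mul_cont (a:=Z)) (cst_cont (c:=Z))).
by apply: Hx; rewrite -e -h_mul pm_0r.
Qed.

Lemma iso_of_trace (O : set S) p : open O -> O (h p) ->
  (forall p', O (h p') -> p' = p) -> open [set h p].
Proof.
move=> oO Op tr; suff -> : [set h p] = O by [].
apply/seteqP; split => [t -> //|t Ot].
apply: contrapT => nt.
have ne0 : (O `&` ~` [set h p]) !=set0 by exists t.
have [x0 [[Ot' nt'] [p' _ e]]] := h_dense ne0 (openI oO (open_neq1 S_haus (h p))).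
by apply: nt'; rewrite -e (tr p') // e.
Qed.

Lemma hneq p p' : p <> p' -> h p <> h p'.
Proof. by move=> ne /h_inj. Qed.

Lemma pm_1r (p : polycyclic I) : polymul p (Some ([::], [::])) = p.
Proof.
case: p => [[u v]|] //=.
by case: v => [|k v] /=; rewrite ?cats0 ?drop0.
Qed.

Lemma E_open : open [set E].
Proof.
pose C := h (Cp i).
pose O := [set t | mul t C <> t] `&` [set t | mul t C <> Z] `&`
          [set t | mul C t <> t] `&` [set t | mul C t <> Z].
apply: (@iso_of_trace O).
- rewrite /O; apply: openI; first apply: openI; first apply: openI.
  + exact: (open_neq S_haus (cont_r mul_cont (a:=C)) (fun t => cvg_id)).
  + exact: (open_neq S_haus (cont_r mul_cont (a:=C)) (cst_cont (c:=Z))).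
  + exact: (open_neq S_haus (cont_l mul_cont (a:=C)) (fun t => cvg_id)).
  + exact: (open_neq S_haus (cont_l mul_cont (a:=C)) (cst_cont (c:=Z))).
- rewrite /O /C /E /= -!h_mul pm_1l pm_1r; split; first split; first split;
  by apply: hneq.
- move=> p' [[[h1 h2] h3] h4]; apply: (iso_one (i := i)); apply/eqP => e;
  [apply: h1 | apply: h2 | apply: h3 | apply: h4]; by rewrite /C -h_mul e.
Qed.


Let xs n := h (Some ([::], wd i j n)).
Let ys n := h (Some (wd i j n, [::])).
Let cs n := h (Some (wd i j n, wd i j n)).

Lemma ys_open n : open [set ys n].
Proof.
apply: (@iso_of_trace ((fun t => mul (xs n) t) @^-1` [set E])).
- apply: open_comp; [move=> t _; exact: cont_l | exact: E_open].
- by rewrite /= /xs /ys /E -h_mul xy_one.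
- by move=> p' /=; rewrite /xs /E -h_mul => /h_inj; exact: mul_one_l.
Qed.

Lemma xs_open n : open [set xs n].
Proof.
apply: (@iso_of_trace ((fun t => mul t (ys n)) @^-1` [set E])).
- apply: open_comp; [move=> t _; exact: cont_r | exact: E_open].
- by rewrite /= /xs /ys /E -h_mul xy_one.
- by move=> p' /=; rewrite /ys /E -h_mul => /h_inj; exact: mul_one_r.
Qed.

Lemma cs_open n : open [set cs n].
Proof.
pose Q := h (Some (qd i n, qd i n)).
apply: (@iso_of_trace (((fun t => mul (xs n) t) @^-1` [set xs n]) `&` [set t | mul t Q <> Q])).
- apply: openI.
    apply: open_comp; [move=> t _; exact: cont_l | exact: xs_open].
  exact: (open_neq S_haus (cont_r mul_cont (a:=Q)) (cst_cont (c:=Q))).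
- split; first by rewrite /= /xs /cs -h_mul xc_x.
  by rewrite /= /cs /Q -h_mul wd_qd_incomp //; apply: hneq.
- move=> p' [/= e1 e2]; move: e1; rewrite /xs -h_mul => /h_inj /mul_fix_l [u eu pu].
  rewrite eu; case: (eqVneq u (wd i j n)) => [-> //|nu].
  exfalso; apply: e2; rewrite /Q eu -h_mul idem_below //.
  exact: (prefix_wd_proper pu nu).
Qed.

Lemma xs_inj : injective xs.
Proof. by move=> n m /h_inj [] /(congr1 size); rewrite !size_wd => -[]. Qed.
Lemma ys_inj : injective ys.
Proof. by move=> n m /h_inj [] /(congr1 size); rewrite !size_wd => -[]. Qed.
Lemma cs_inj : injective cs.
Proof. by move=> n m /h_inj [] /(congr1 size); rewrite !size_wd => -[]. Qed.

Definition acc (u : nat -> S) (q : S) :=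
  forall N, nbhs q N -> forall n0, exists n, (n0 <= n)%N /\ N (u n).
Definition conv (u : nat -> S) :=
  forall W, nbhs Z W -> exists n0, forall n, (n0 <= n)%N -> W (u n).

Lemma sepZ (q : S) : q <> Z ->
  exists U, exists V, [/\ nbhs q U, nbhs Z V & forall t, U t -> V t -> False].
Proof.
move=> /eqP qZ; move: S_haus; rewrite open_hausdorff => /(_ _ _ qZ).
move=> [[U V] [/= /set_mem qU /set_mem ZV]] [oU oV /eqP UV].
exists U, V; split; [exact: open_nbhs_nbhs | exact: open_nbhs_nbhs|].
by move=> t Ut Vt; move: UV; rewrite -subset0 => /(_ t); apply.
Qed.

Lemma sep_rfix a b q : conv b -> (forall n, mul (a n) (b n) = a n) -> acc a q -> q = Z.
Proof.
move=> cb ab aq; apply: contrapT => /sepZ [U [V [nU nV UV]]].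
have : nbhs (mul q Z) V by rewrite Z_r.
move=> /(mul_nbhs mul_cont) [N [M [nN nM NM]]].
have [n0 hn0] := cb _ nM.
have [n [hn [Nn Un]]] := aq _ (filterI nN nU) n0.
by apply: (UV (a n)) => //; rewrite -ab; apply: NM => //; apply: hn0.
Qed.

Lemma sep_lfix a b q : conv b -> (forall n, mul (b n) (a n) = a n) -> acc a q -> q = Z.
Proof.
move=> cb ab aq; apply: contrapT => /sepZ [U [V [nU nV UV]]].
have : nbhs (mul Z q) V by rewrite Z_l.
move=> /(mul_nbhs mul_cont) [M [N [nM nN NM]]].
have [n0 hn0] := cb _ nM.
have [n [hn [Nn Un]]] := aq _ (filterI nN nU) n0.
by apply: (UV (a n)) => //; rewrite -ab; apply: NM => //; apply: hn0.
Qed.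

Lemma sep_idem a q : (forall n, mul (a n) (a n) = a n) ->
  (forall m, exists n0, forall n, (n0 <= n)%N -> mul (a n) (a m) = Z) ->
  acc a q -> q = Z.
Proof.
move=> aa orth aq.
have qa : forall m, mul q (a m) = Z.
  move=> m; apply: contrapT => ne.
  have [n0 hn0] := orth m.
  have nO : nbhs q [set t | mul t (a m) <> Z].
    apply: open_nbhs_nbhs; split => //.
    exact: (open_neq S_haus (cont_r mul_cont (a:=a m)) (cst_cont (c:=Z))).
  have [n [hn Hn]] := aq _ nO n0.
  by apply: Hn; apply: hn0.
have qq : mul q q = Z.
  apply: contrapT => ne.
  have nO : nbhs q [set t | mul q t <> Z].
    apply: open_nbhs_nbhs; split => //.
    exact: (open_neq S_haus (cont_l mul_cont (a:=q)) (cst_cont (c:=Z))).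
  have [n [hn Hn]] := aq _ nO 0.
  exact: Hn.
apply: contrapT => /sepZ [U [V [nU nV UV]]].
have : nbhs (mul q q) V by rewrite qq.
move=> /(mul_nbhs mul_cont) [N [M [nN nM NM]]].
have [n [_ [[Nn Mn] Un]]] := aq _ (filterI (filterI nN nM) nU) 0.
by apply: (UV (a n)) => //; rewrite -aa; apply: NM.
Qed.

Lemma incr_ge (f : nat -> nat) : (forall k, (f k < f k.+1)%N) -> forall n, (n <= f n)%N.
Proof. by move=> hf; elim=> [//|n ih]; apply: leq_ltn_trans ih (hf n). Qed.

Lemma incr_lt (f : nat -> nat) : (forall k, (f k < f k.+1)%N) -> forall m n, (m < n)%N -> (f m < f n)%N.
Proof. by move=> hf; apply: (homo_ltn (r := fun a b => (a < b)%N)) => // ? ? ?; apply: ltn_trans. Qed.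

Lemma conv_comp u f : conv u -> (forall k, (f k < f k.+1)%N) -> conv (u \o f).
Proof.
move=> cu hf W nW; have [n0 hn0] := cu W nW; exists n0 => n hn /=.
by apply: hn0; apply: leq_trans hn (incr_ge hf n).
Qed.

Lemma conv_of u : (forall n, open [set u n]) -> injective u ->
  (forall f : nat -> nat, (forall k, (f k < f k.+1)%N) -> forall q, acc (u \o f) q -> q = Z) ->
  conv u.
Proof.
move=> ou iu H W nW; apply: contrapT => nc.
have : forall n0, exists n, (n0 <= n)%N /\ ~ W (u n).
  move=> n0; apply: contrapT => hn; apply: nc; exists n0 => n ge.
  apply: contrapT => nWn; apply: hn; by exists n.
move=> /choice [g hg].
pose f := fix f k := if k is k'.+1 then g (f k').+1 else g 0.
have hf : forall k, (f k < f k.+1)%N by move=> k /=; exact: (hg _).1.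
have fi : injective f.
  move=> a b e; case: (ltngtP a b) => // hab.
    by have := incr_lt hf hab; rewrite e ltnn.
  by have := incr_lt hf hab; rewrite e ltnn.
have [q hq] := acc_exists S_haus S_dfc (u := u \o f) (fun n => ou (f n))
  (fun a b e => fi a b (iu _ _ e)).
have qZ := H f hf q hq.
have nWq : nbhs q W by rewrite qZ.
have [n [_ Wn]] := hq W nWq 0.
by case: n Wn => [|k] /= Wn; apply: (hg _).2 Wn.
Qed.


Lemma cs_conv : conv cs.
Proof.
apply: conv_of; [exact: cs_open | exact: cs_inj |] => f hf q hq.
apply: (sep_idem (a := cs \o f)) hq.
  by move=> n; rewrite /cs /= -h_mul idem_self.
move=> m; exists m.+1 => n hn /=.
rewrite /cs -h_mul wd_cc //.
by rewrite neq_ltn (incr_lt hf hn) orbT.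
Qed.

Lemma xs_conv : conv xs.
Proof.
apply: conv_of; [exact: xs_open | exact: xs_inj |] => f hf q hq.
apply: (sep_rfix (b := cs \o f) (conv_comp cs_conv hf)) hq.
by move=> n; rewrite /xs /cs /= -h_mul xc_x.
Qed.

Lemma ys_conv : conv ys.
Proof.
apply: conv_of; [exact: ys_open | exact: ys_inj |] => f hf q hq.
apply: (sep_lfix (b := cs \o f) (conv_comp cs_conv hf)) hq.
by move=> n; rewrite /ys /cs /= -h_mul cy_y.
Qed.

Lemma main_false : False.
Proof.
have nV : nbhs (mul Z Z) (~` [set E]).
  rewrite Z_l; apply: open_nbhs_nbhs; split; first exact: open_neq1.
  by apply: hneq.
have [N [M [nN nM NM]]] := mul_nbhs mul_cont nV.
have [n1 h1] := xs_conv nN.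
have [n2 h2] := ys_conv nM.
apply: (NM (xs (maxn n1 n2)) (ys (maxn n1 n2))).
- by apply: h1; rewrite leq_maxl.
- by apply: h2; rewrite leq_maxr.
- by rewrite /xs /ys /E -h_mul xy_one.
Qed.

End Main.

Unset Implicit Arguments.
Unset Strict Implicit.

Theorem corollary13 (I : eqType) (i j : I) (hij : i != j)
  (S : topologicalType) (mul : S -> S -> S)
  (mul_assoc : associative mul)
  (mul_cont : continuous (fun p : S * S => mul p.1 p.2))
  (S_haus : hausdorff_space S)
  (S_dfc : d_feebly_compact S) :
  ~ contains_dense_polycyclic I mul.
Proof.
move=> [h [hinj hmul hdense]].
exact: (main_false hij mul_cont S_haus S_dfc hinj hmul hdense).
Qed.
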